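(* Let $G$ be an $(N,k)$ Adinkra with vertex set $V$, with the matrices $\gamma_1,\dots,\gamma_N$ defined as in the context, and let $M=\gamma_{i_1}\gamma_{i_2}\cdots\gamma_{i_t}$ for some $i_1,\dots,i_t\in\{1,\dots,N\}$. Then $M_{x,x}\neq0$ for some $x\in V$ if and only if $M_{x,x}\neq 0$ for all $x\in V$.
   Context: An Adinkra of dimension $N$ is a finite connected simple graph $G=(V,E)$ with: a bipartition of $V$ into bosons and fermions (every edge joins a boson and a fermion); a height function (irrelevant here); a coloring of $E$ by colors $\{1,\dots,N\}$ such that each vertex is incident to exactly one edge of each color; an edge parity $\pi:E\to\mathbb{Z}_2$ (parity $1$ = dashed); such that every path with edge colors $(i,j)$, $i\ne j$, lies in a unique 4-cycle with colors $(i,j,i,j)$, each having an odd number of dashed edges. If $|V|=2^{N-k}$, $G$ is an $(N,k)$ Adinkra; it has $n=2^{N-k-1}$ bosons $b_1,\dots,b_n$ and $n$ fermions $f_1,\dots,f_n$. For each color $i$, $L_i$ is the $n\times n$ matrix with $(L_i)_{r,s}=+1$ if $b_r,f_s$ are joined by a solid edge of color $i$, $-1$ if joined by a dashed edge of color $i$, and $0$ otherwise. $\gamma_i$ is the $2n\times 2n$ matrix $\begin{pmatrix}0&L_i\\ L_i^{T}&0\end{pmatrix}$ with rows and columns indexed by $V$ (bosons first, then fermions). *)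

(* Defs.v *)
From mathcomp Require Import all_boot all_order all_algebra.
Set Implicit Arguments. Unset Strict Implicit. Unset Printing Implicit Defensive.
Import Order.TTheory GRing.Theory Num.Theory.
Local Open Scope ring_scope.

(* Each edge {x,y} carries a colour col x y : 'I_N (colours
   1..N are represented by 0..N-1) and a parity dashed x y (true = dashed);
   these are required to be symmetric on edges.  boson is the bipartition
   (bosons = boson, fermions = ~~ boson).  The height function is irrelevant
   and omitted. *)
Definition is_adinkra (N : nat) (V : finType) (adj : rel V) (boson : pred V)
    (col : V -> V -> 'I_N) (dashed : V -> V -> bool) : Prop :=
  [/\ (forall x y, adj x y = adj y x) /\ (forall x, ~~ adj x x),
      (forall x y, connect adj x y) /\
      (forall x y, adj x y -> boson x != boson y),
      (forall x y, adj x y -> col x y = col y x /\ dashed x y = dashed y x),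
      (forall x (i : 'I_N), #|[set y | adj x y & col x y == i]| = 1%N) &
      (forall x y z, adj x y -> adj y z -> col x y != col y z ->
        (exists! w, [/\ adj z w, col z w = col x y, adj w x & col w x = col y z])
        /\ (forall w, [/\ adj z w, col z w = col x y, adj w x & col w x = col y z] ->
              odd (dashed x y + dashed y z + dashed z w + dashed w x)%N))].

Definition is_Nk_adinkra (N k : nat) (V : finType) (adj : rel V) (boson : pred V)
    (col : V -> V -> 'I_N) (dashed : V -> V -> bool) : Prop :=
  is_adinkra adj boson col dashed /\ #|V| = (2 ^ (N - k))%N.

Definition enumerates (V : finType) (boson : pred V) (n : nat)
    (bos fer : 'I_n -> V) : Prop :=
  [/\ injective bos /\ injective fer,
      (forall r, boson (bos r)), (forall s, ~~ boson (fer s)),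
      (forall v, boson v -> exists r, bos r = v) &
      (forall v, ~~ boson v -> exists s, fer s = v)].

Definition Lmat (N : nat) (V : finType) (adj : rel V) (col : V -> V -> 'I_N)
    (dashed : V -> V -> bool) (n : nat) (bos fer : 'I_n -> V) (i : 'I_N)
    : 'M[int]_n :=
  \matrix_(r, s)
    (if adj (bos r) (fer s) && (col (bos r) (fer s) == i)
     then (if dashed (bos r) (fer s) then -1 else 1) else 0).

(* gamma_i = [[0, L_i], [L_i^T, 0]], rows/columns indexed by V via
   b_1..b_n, f_1..f_n (bosons first). *)
Definition gammat (N : nat) (V : finType) (adj : rel V) (col : V -> V -> 'I_N)
    (dashed : V -> V -> bool) (n : nat) (bos fer : 'I_n -> V) (i : 'I_N)
    : 'M[int]_(n + n) :=
  block_mx 0 (Lmat adj col dashed bos fer i)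
           (Lmat adj col dashed bos fer i)^T 0.

Definition gamma_prod (N : nat) (V : finType) (adj : rel V) (col : V -> V -> 'I_N)
    (dashed : V -> V -> bool) (n : nat) (bos fer : 'I_n -> V) (s : seq 'I_N)
    : 'M[int]_(n + n) :=
  \big[mulmx/1%:M]_(i <- s) gammat adj col dashed bos fer i.

(* Main.v *)
Require Import Defs.
From mathcomp Require Import all_boot all_order all_algebra.
Import Order.TTheory GRing.Theory Num.Theory.
Set Implicit Arguments. Unset Strict Implicit. Unset Printing Implicit Defensive.
Local Open Scope ring_scope.

Definition nb (N : nat) (V : finType) (adj : rel V) (col : V -> V -> 'I_N)
  (i : 'I_N) (v : V) : V := odflt v [pick y | adj v y && (col v y == i)].

Lemma nb_spec (N : nat) (V : finType) (adj : rel V) (col : V -> V -> 'I_N) :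
  (forall x (i : 'I_N), #|[set y | adj x y & col x y == i]| = 1%N) ->
  forall i v y, (y == nb adj col i v) = adj v y && (col v y == i).
Proof.
move=> Hc i v y.
have /cards1P [a Ha] : #|[set y | adj v y & col v y == i]| == 1%N by rewrite Hc.
have key : forall y, (adj v y && (col v y == i)) = (y == a).
  by move=> z; have := congr1 (fun B : {set V} => z \in B) Ha; rewrite !inE.
have -> : nb adj col i v = a.
  rewrite /nb; case: pickP => [b Hb|H]; first by rewrite key in Hb; exact: (eqP Hb).
  by have := H a; rewrite key eqxx.
by rewrite key.
Qed.

Section A.
End A.

Lemma nb_adj (N : nat) (V : finType) (adj : rel V) (boson : pred V)
    (col : V -> V -> 'I_N) (dashed : V -> V -> bool) :
  is_adinkra adj boson col dashed ->
  forall i v, adj v (nb adj col i v) && (col v (nb adj col i v) == i).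
Proof.
case=> _ _ _ Hc _ i v; by rewrite -(nb_spec Hc).
Qed.

Lemma nb_inv (N : nat) (V : finType) (adj : rel V) (boson : pred V)
    (col : V -> V -> 'I_N) (dashed : V -> V -> bool) :
  is_adinkra adj boson col dashed ->
  forall i v, nb adj col i (nb adj col i v) = v.
Proof.
move=> H i v; have /andP[a c] := nb_adj H i v.
case: H => [[Hs _] _ Hcs Hc _].
apply/esym/eqP; rewrite (nb_spec Hc) -Hs a /=.
by have [<- _] := Hcs _ _ a.
Qed.

Lemma nb_comm (N : nat) (V : finType) (adj : rel V) (boson : pred V)
    (col : V -> V -> 'I_N) (dashed : V -> V -> bool) :
  is_adinkra adj boson col dashed ->
  forall i j v, nb adj col i (nb adj col j v) = nb adj col j (nb adj col i v).
Proof.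
move=> H i j v.
have [->|ij] := eqVneq i j; first by [].
set y := nb adj col i v; set z := nb adj col j y.
have /andP[a1 /eqP c1] := nb_adj H i v.
have /andP[a2 /eqP c2] := nb_adj H j y.
have Hinv := nb_inv H.
case: H => [[Hs _] _ Hcs Hc H4].
have ne : col v y != col y z by rewrite -/y in c1; rewrite c1 -/z c2.
have [[w [[aw cw aw' cw'] _]] _] := H4 v y z a1 a2 ne.
have e1 : w = nb adj col j v.
  apply/eqP; rewrite (nb_spec Hc) -Hs aw' /=.
  by have [<- _] := Hcs _ _ aw'; rewrite cw' -c2.
have e2 : w = nb adj col i z.
  by apply/eqP; rewrite (nb_spec Hc) aw cw c1 eqxx.
by rewrite -e1 e2 Hinv.
Qed.

Definition gs (N : nat) (V : finType) (adj : rel V) (col : V -> V -> 'I_N)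
  (s : seq 'I_N) (v : V) : V := foldl (fun u i => nb adj col i u) v s.

Lemma gs_nb (N : nat) (V : finType) (adj : rel V) (boson : pred V)
    (col : V -> V -> 'I_N) (dashed : V -> V -> bool) :
  is_adinkra adj boson col dashed ->
  forall s j v, gs adj col s (nb adj col j v) = nb adj col j (gs adj col s v).
Proof.
move=> H; elim=> [|i s IH] j v //=.
by rewrite /gs /= -/(gs _ _ s _) (nb_comm H) IH.
Qed.

Lemma gs_fix (N : nat) (V : finType) (adj : rel V) (boson : pred V)
    (col : V -> V -> 'I_N) (dashed : V -> V -> bool) :
  is_adinkra adj boson col dashed ->
  forall s u w, gs adj col s u = u -> gs adj col s w = w.
Proof.
move=> H s u w Hu.
have Hadj := nb_adj H.
case: (H) => [[Hs _] [Hconn _] Hcs Hc _].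
have cl : closed adj [pred v | gs adj col s v == v].
  apply: intro_closed; first exact: sym_connect_sym.
  move=> x y a /=; rewrite !inE /= => /eqP fx.
  have -> : y = nb adj col (col x y) x by apply/eqP; rewrite (nb_spec Hc) a eqxx.
  by rewrite (gs_nb H) fx.
have := closed_connect cl (Hconn u w).
by rewrite !inE /= Hu eqxx => /esym/eqP.
Qed.

Definition pat (m : nat) (V : finType) (e : 'I_m -> V) (A : 'M[int]_m) (g : V -> V)
  := forall x y, (A x y != 0) = (e y == g (e x)).

Lemma pat_one (m : nat) (V : finType) (e : 'I_m -> V) :
  injective e -> pat e 1%:M id.
Proof.
move=> ei x y; rewrite mxE /= (inj_eq ei) eq_sym.
by rewrite eq_sym; case: (x =P y) => [->|]; rewrite ?eqxx // => /eqP; rewrite eq_sym => /negbTE ->.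
Qed.

Lemma pat_mul (m : nat) (V : finType) (e : 'I_m -> V) A B f g :
  injective e -> (forall v, exists z, e z = v) ->
  pat e A f -> pat e B g -> pat e (A *m B) (fun v => g (f v)).
Proof.
move=> ei es pA pB x y.
have [z0 ez0] := es (f (e x)).
rewrite mxE (bigD1 z0) //= big1 ?addr0.
  by rewrite mulf_eq0 negb_or pA ez0 eqxx /= pB ez0.
move=> z nz; have : A x z == 0.
  by rewrite -[A x z == 0]negbK pA -ez0 (inj_eq ei) (negbTE nz).
by move/eqP->; rewrite mul0r.
Qed.

Definition ev (n : nat) (V : Type) (bos fer : 'I_n -> V) (x : 'I_(n + n)) : V :=
  match split x with inl r => bos r | inr s => fer s end.

Lemma ev_l n (V : Type) (bos fer : 'I_n -> V) r : ev bos fer (lshift n r) = bos r.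
Proof. by rewrite /ev -/(unsplit (inl r)) unsplitK. Qed.

Lemma ev_r n (V : Type) (bos fer : 'I_n -> V) r : ev bos fer (rshift n r) = fer r.
Proof. by rewrite /ev -/(unsplit (inr r)) unsplitK. Qed.

Lemma Lmat_nz (N : nat) (V : finType) (adj : rel V) (col : V -> V -> 'I_N)
    (dashed : V -> V -> bool) (n : nat) (bos fer : 'I_n -> V) i r s :
  (Lmat adj col dashed bos fer i r s != 0) =
  adj (bos r) (fer s) && (col (bos r) (fer s) == i).
Proof. by rewrite mxE; case: ifP => _ //; case: ifP. Qed.

Lemma pat_gamma (N : nat) (V : finType) (adj : rel V) (boson : pred V)
    (col : V -> V -> 'I_N) (dashed : V -> V -> bool)
    (n : nat) (bos fer : 'I_n -> V) (i : 'I_N) :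
  is_adinkra adj boson col dashed -> enumerates boson bos fer ->
  pat (ev bos fer) (gammat adj col dashed bos fer i) (nb adj col i).
Proof.
move=> H [_ Hb Hf _ _] x y.
case: (H) => [[Hs _] [_ Hbip] Hcs Hc _].
have nad : forall u v, boson u = boson v -> adj u v = false.
  by move=> u v e; apply/negbTE/negP => /Hbip; rewrite e eqxx.
rewrite -(splitK x) -(splitK y).
case: (split x) => r; case: (split y) => s /=; rewrite /gammat.
- by rewrite block_mxEul ev_l ev_l mxE eqxx (nb_spec Hc) nad // !Hb.
- by rewrite block_mxEur ev_l ev_r (nb_spec Hc) Lmat_nz.
- rewrite block_mxEdl ev_l ev_r (nb_spec Hc) mxE Lmat_nz Hs.
  by case a: (adj (fer r) (bos s)) => //=; have [-> _] := Hcs _ _ a.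
- by rewrite block_mxEdr ev_r ev_r mxE eqxx (nb_spec Hc) nad //; rewrite !(negbTE (Hf _)).
Qed.

Theorem mainTheorem12 (N k : nat) (V : finType) (adj : rel V) (boson : pred V)
    (col : V -> V -> 'I_N) (dashed : V -> V -> bool)
    (n : nat) (bos fer : 'I_n -> V) (s : seq 'I_N) :
  is_Nk_adinkra k adj boson col dashed ->
  enumerates boson bos fer ->
  (exists x : 'I_(n + n), gamma_prod adj col dashed bos fer s x x != 0) <->
  (forall x : 'I_(n + n), gamma_prod adj col dashed bos fer s x x != 0).
Proof.
move=> [H Hcard] E.
have [[bi fi] Hb Hf Sb Sf] := E.
have ei : injective (ev bos fer).
  move=> x y; rewrite -(splitK x) -(splitK y).
  case: (split x) => r; case: (split y) => s' /=;
    rewrite ?ev_l ?ev_r => e.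
  - by rewrite (bi _ _ e).
  - by have := Hb r; rewrite e (negbTE (Hf s')).
  - by have := Hb s'; rewrite -e (negbTE (Hf r)).
  - by rewrite (fi _ _ e).
have es : forall v, exists z, ev bos fer z = v.
  move=> v; case bv: (boson v).
  - by have [r <-] := Sb v bv; exists (lshift n r); rewrite ev_l.
  - by have [r <-] := Sf v (negbT bv); exists (rshift n r); rewrite ev_r.
have P : forall t, pat (ev bos fer) (gamma_prod adj col dashed bos fer t) (gs adj col t).
  elim=> [|i t IH].
    rewrite /gamma_prod big_nil; exact: pat_one.
  rewrite /gamma_prod big_cons.
  exact: (pat_mul ei es (pat_gamma i H E) IH).
split.
  move=> [x0 hx] x; rewrite P in hx; rewrite P; apply/eqP; apply: esym.
  apply: (gs_fix H (u := ev bos fer x0)); exact: (esym (eqP hx)).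
move=> Hall.
have : (0 < #|V|)%N by rewrite Hcard expn_gt0.
case/card_gt0P => v _; have [z _] := es v.
by exists z.
Qed.
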